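(* If $R$ is a $v$-domain, then every nonzero finitely generated ideal of $R$ is $t$-basic.
   Context: For a domain $R$ with quotient field $K$: $I^{-1}=(R:I)=\{x\in K:xI\subseteq R\}$, $I_v=(I^{-1})^{-1}$, $I_t=\bigcup J_v$ over finitely generated subideals $J\subseteq I$. $R$ is a $v$-domain if every nonzero finitely generated ideal $I$ satisfies $(II^{-1})_v=R$. For a nonzero ideal $I$, an ideal $J\subseteq I$ is a $t$-reduction of $I$ if $(JI^n)_t=(I^{n+1})_t$ for some integer $n\ge0$; $I$ is $t$-basic if every $t$-reduction $J$ of $I$ satisfies $J_t=I_t$. *)

(* Defs.v *)
From HB Require Import structures.
From mathcomp Require Import all_boot all_order all_algebra.
From mathcomp Require Import fraction.
Set Implicit Arguments. Unset Strict Implicit. Unset Printing Implicit Defensive.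
Import GRing.Theory.
Local Open Scope ring_scope.

Section StarOps.
Variable R : idomainType.
Local Notation K := {fraction R}.
Local Notation emb := (@FracField.tofrac R).

Definition kset := K -> Prop.

Definition Rset : kset := fun x => exists r : R, x = emb r.

Definition subset (A B : kset) : Prop := forall x, A x -> B x.
Definition set_eq (A B : kset) : Prop := forall x, A x <-> B x.

Definition is_ideal (I : kset) : Prop :=
  [/\ subset I Rset, I 0,
      (forall x y, I x -> I y -> I (x + y)) &
      (forall r x, I x -> I (emb r * x))].

Definition nonzero (I : kset) : Prop := exists x, I x /\ x <> 0.

Definition span (s : seq K) : kset :=
  fun x => exists c : nat -> R, x = \sum_(i < size s) emb (c i) * s`_i.

Definition fin_gen (I : kset) : Prop := exists s : seq K, set_eq I (span s).

Definition prod_set (A B : kset) : kset :=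
  fun x => exists (n : nat) (a b : nat -> K),
    (forall i, (i < n)%N -> A (a i) /\ B (b i)) /\
    x = \sum_(i < n) a i * b i.

Fixpoint pow_set (A : kset) (n : nat) : kset :=
  match n with
  | 0%N => Rset
  | n'.+1 => prod_set (pow_set A n') A
  end.

Definition colon (A B : kset) : kset :=
  fun x => forall b, B b -> A (x * b).

Definition inv_set (I : kset) : kset := colon Rset I.

Definition v_op (I : kset) : kset := inv_set (inv_set I).

Definition t_op (I : kset) : kset :=
  fun x => exists s : seq K, subset (span s) I /\ v_op (span s) x.

Definition v_domain : Prop :=
  forall I : kset, is_ideal I -> nonzero I -> fin_gen I ->
    set_eq (v_op (prod_set I (inv_set I))) Rset.

Definition t_reduction (J I : kset) : Prop :=
  is_ideal J /\ subset J I /\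
  exists n : nat, set_eq (t_op (prod_set J (pow_set I n))) (t_op (pow_set I n.+1)).

Definition t_basic (I : kset) : Prop :=
  forall J : kset, t_reduction J I -> set_eq (t_op J) (t_op I).

End StarOps.

(* Main.v *)
From Pilot Require Import Defs.
From mathcomp Require Import all_boot all_order all_algebra.
From mathcomp Require Import fraction ring.
Set Implicit Arguments. Unset Strict Implicit. Unset Printing Implicit Defensive.
Import GRing.Theory.
Local Open Scope ring_scope.

Section Aux.
Variable R : idomainType.
Local Notation K := {fraction R}.
Local Notation emb := (@FracField.tofrac R).
Local Notation dspan := (@Pilot.Defs.span R).
Local Notation subset := (@Pilot.Defs.subset R).

Lemma R0 : Rset (0 : K). Proof. by exists 0; rewrite rmorph0. Qed.
Lemma R1 : Rset (1 : K). Proof. by exists 1; rewrite rmorph1. Qed.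
Lemma RD (x y : K) : Rset x -> Rset y -> Rset (x + y).
Proof. by move=> [a ->] [b ->]; exists (a + b); rewrite rmorphD. Qed.
Lemma RM (x y : K) : Rset x -> Rset y -> Rset (x * y).
Proof. by move=> [a ->] [b ->]; exists (a * b); rewrite rmorphM. Qed.
Lemma Remb (r : R) : Rset (emb r). Proof. by exists r. Qed.
Lemma Rsum n (F : 'I_n -> K) : (forall i, Rset (F i)) -> Rset (\sum_(i < n) F i).
Proof. move=> h; apply: (big_ind (@Rset R)) => //; [exact: R0 | exact: RD]. Qed.

Lemma mem_span (s : seq K) a : a \in s -> dspan s a.
Proof.
move=> ha; have hi : (index a s < size s)%N by rewrite index_mem.
exists (fun j => if j == index a s then 1 else 0).
rewrite (bigD1 (Ordinal hi)) //= eqxx rmorph1 mul1r nth_index // big1 ?addr0 //.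
move=> j hj; rewrite (_ : (j : nat) == index a s = false) ?rmorph0 ?mul0r //.
apply/eqP => E; move/eqP: hj; apply; exact: val_inj.
Qed.

Lemma span_sub (s : seq K) (T : kset R) : T 0 ->
  (forall x y, T x -> T y -> T (x + y)) -> (forall r x, T x -> T (emb r * x)) ->
  (forall x, x \in s -> T x) -> subset (dspan s) T.
Proof.
move=> h0 hD hM hs x [c ->]; apply: (big_ind T) => // i _.
apply: hM; apply: hs; exact: mem_nth.
Qed.

Lemma ideal_span (J : kset R) (S : seq K) : is_ideal J -> (forall x, x \in S -> J x) ->
  subset (dspan S) J.
Proof. by move=> [_ h0 hD hM] hS; apply: span_sub. Qed.

Lemma inv_anti (A B : kset R) : subset A B -> subset (inv_set B) (inv_set A).
Proof. by move=> hAB x hx b hb; apply: hx; apply: hAB. Qed.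

Lemma sub_v (A : kset R) : subset A (v_op A).
Proof. by move=> a ha w hw; rewrite mulrC; apply: hw. Qed.

Lemma v_mono (A B : kset R) : subset A B -> subset (v_op A) (v_op B).
Proof. by move=> h; apply: inv_anti; apply: inv_anti. Qed.

Lemma vv (A : kset R) : subset (v_op (v_op A)) (v_op A).
Proof. apply: inv_anti; apply: sub_v. Qed.

Fixpoint Sn (I : kset R) (n : nat) (w : K) : Prop :=
  match n with
  | 0%N => Rset w
  | n'.+1 => exists w' h, Sn I n' w' /\ inv_set I h /\ w = w' * h
  end.

Lemma Sn_pow (I : kset R) n w p : Sn I n w -> pow_set I n p -> Rset (w * p).
Proof.
elim: n w p => [|n IH] w p /=; first exact: RM.
move=> [w' [h [hw' [hh ->]]]] [m [a [b [hab ->]]]].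
rewrite mulr_sumr; apply: Rsum => i; have [ha hb] := hab i (ltn_ord i).
have -> : w' * h * (a i * b i) = (w' * a i) * (h * b i) by ring.
apply: RM; [exact: IH | exact: hh].
Qed.

Fixpoint prods (s0 : seq K) (n : nat) : seq K :=
  match n with
  | 0%N => [:: 1]
  | n'.+1 => [seq q * a | q <- prods s0 n', a <- s0]
  end.

Lemma combine (J : kset R) (P : seq K -> K -> Prop) (L : seq K) :
  (forall S S' g, {subset S <= S'} -> P S g -> P S' g) ->
  (forall g, g \in L -> exists S, (forall x, x \in S -> J x) /\ P S g) ->
  exists S, (forall x, x \in S -> J x) /\ (forall g, g \in L -> P S g).
Proof.
move=> hmono; elim: L => [|g L IH] hL; first by exists [::].
have [S1 [h1J h1P]] := hL g (mem_head _ _).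
have [S2 [h2J h2P]] : exists S, (forall x, x \in S -> J x) /\ (forall g, g \in L -> P S g).
  by apply: IH => g' hg'; apply: hL; rewrite inE hg' orbT.
exists (S1 ++ S2); split.
  by move=> x; rewrite mem_cat => /orP [] ?; [apply: h1J | apply: h2J].
move=> g'; rewrite inE => /orP [/eqP -> | hg'].
  by apply: (hmono S1) h1P => x hx; rewrite mem_cat hx.
by apply: (hmono S2) (h2P _ hg') => x hx; rewrite mem_cat hx orbT.
Qed.


Lemma key (I : kset R) (s0 : seq K) : v_domain R -> is_ideal I -> nonzero I ->
  set_eq I (dspan s0) ->
  forall z, (forall a h, a \in s0 -> inv_set I h -> Rset (z * a * h)) -> Rset z.
Proof.
move=> hvd hI hnz hfg z hz.
have hv := hvd I hI hnz (ex_intro _ s0 hfg).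
have h1 : v_op (prod_set I (inv_set I)) 1 by apply/hv; exact: R1.
suff hz' : inv_set (prod_set I (inv_set I)) z by have := h1 z hz'; rewrite mul1r.
move=> b [n [a [bb [hab ->]]]]; rewrite mulr_sumr; apply: Rsum => i.
have [hai hbi] := hab i (ltn_ord i).
have [c ->] := proj1 (hfg (a i)) hai.
rewrite mulr_suml mulr_sumr; apply: Rsum => k.
have -> : z * (emb (c k) * s0`_k * bb i) = emb (c k) * (z * s0`_k * bb i) by ring.
apply: RM; first exact: Remb.
apply: hz => //; exact: mem_nth.
Qed.

Lemma claim (I : kset R) (s0 : seq K) : v_domain R -> is_ideal I -> nonzero I ->
  set_eq I (dspan s0) -> forall n z,
  (forall q w, q \in prods s0 n -> Sn I n w -> Rset (z * q * w)) -> Rset z.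
Proof.
move=> hvd hI hnz hfg; elim=> [|n IH] z hz.
  by have := hz 1 1 (mem_head _ _) R1; rewrite !mulr1.
apply: (key hvd hI hnz hfg) => a h ha hh.
apply: IH => q w hq hw.
have := hz (q * a) (w * h) (allpairs_f _ hq ha) (ex_intro _ w (ex_intro _ h (conj hw (conj hh erefl)))).
by have -> : z * (q * a) * (w * h) = z * a * h * q * w by ring.
Qed.

Lemma s0_in (I : kset R) (s0 : seq K) : set_eq I (dspan s0) -> forall a, a \in s0 -> I a.
Proof. by move=> hfg a ha; apply/hfg; apply: mem_span. Qed.

Lemma prods_pow (I : kset R) (s0 : seq K) : set_eq I (dspan s0) ->
  forall n q, q \in prods s0 n -> pow_set I n q.
Proof.
move=> hfg; elim=> [|n IH] q /=; first by rewrite inE => /eqP ->; exact: R1.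
case/allpairsP => [[q' a] [/= hq ha ->]].
exists 1%N, (fun _ => q'), (fun _ => a); split; last by rewrite big_ord1.
by move=> i _; split; [exact: IH | exact: s0_in hfg _ ha].
Qed.

Lemma prods_t (I : kset R) (s0 : seq K) : is_ideal I -> set_eq I (dspan s0) ->
  forall n g, g \in prods s0 n.+1 -> t_op (pow_set I n.+1) g.
Proof.
move=> hI hfg n g hg; exists [:: g]; split; last by apply: sub_v; apply: mem_span; exact: mem_head.
move: hg => /= /allpairsP [[q a] [/= hq ha ->]].
move=> x [c ->]; rewrite big_ord1 /=.
exists 1%N, (fun _ => q), (fun _ => emb (c 0%N) * a); split; last first.
  by rewrite big_ord1; ring.
move=> i _; split; first exact: prods_pow hfg _ _ hq.
case: hI => _ _ _ hM; apply: hM; exact: s0_in hfg _ ha.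
Qed.


Definition Elem (I : kset R) (n : nat) (S : seq K) (e : K) : Prop :=
  exists m (j p : nat -> K), (forall i, (i < m)%N -> j i \in S /\ pow_set I n (p i)) /\
    e = \sum_(i < m) j i * p i.

Definition Good (I : kset R) (n : nat) (S : seq K) (g : K) : Prop :=
  exists sg : seq K, (forall e, e \in sg -> Elem I n S e) /\ v_op (dspan sg) g.

Lemma Elem_mono I n S S' e : {subset S <= S'} -> Elem I n S e -> Elem I n S' e.
Proof.
move=> hs [m [j [p [h ->]]]]; exists m, j, p; split => // i hi.
by have [h1 h2] := h i hi; split => //; apply: hs.
Qed.

Lemma Good_mono I n S S' g : {subset S <= S'} -> Good I n S g -> Good I n S' g.
Proof.
move=> hs [sg [h hv]]; exists sg; split => // e he; apply: Elem_mono hs _; exact: h.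
Qed.

Lemma get_good (I J : kset R) n g :
  t_op (prod_set J (pow_set I n)) g ->
  exists S, (forall x, x \in S -> J x) /\ Good I n S g.
Proof.
move=> [sg [hsub hv]].
have [S [hSJ hSP]] : exists S, (forall x, x \in S -> J x) /\
    (forall e, e \in sg -> Elem I n S e).
  apply: combine; first exact: Elem_mono.
  move=> e he; have [m [j [p [hjp he']]]] := hsub e (mem_span he).
  exists (mkseq j m); split.
    move=> x /mapP [i]; rewrite mem_iota add0n => /andP [_ hi] ->.
    by have [] := hjp i hi.
  exists m, j, p; split => // i hi; have [_ hp] := hjp i hi; split => //.
  by rewrite /mkseq map_f // mem_iota add0n.
by exists S; split => //; exists sg.
Qed.

End Aux.

Local Notation emb := (@FracField.tofrac _).

Theorem corollary1p9 (R : idomainType) :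
  v_domain R ->
  forall I : kset R, is_ideal I -> nonzero I -> fin_gen I -> t_basic I.
Proof.
move=> hvd I hI hnz [s0 hfg] J [hJ [hJI [n hn]]] x; split.
  move=> [s [hs hv]]; exists s; split => // y hy; exact: hJI (hs y hy).
move=> [s' [hs' hx]].
have [S [hSJ hSG]] : exists S, (forall x, x \in S -> J x) /\
    (forall g, g \in prods s0 n.+1 -> Good I n S g).
  apply: combine; first exact: Good_mono.
  move=> g hg; apply: get_good; apply/hn; exact: prods_t hI hfg n g hg.
exists S; split; first exact: ideal_span.
apply: vv; apply: v_mono hx => x' hx'.
have hxI := hs' x' hx'.
move=> y hy.
apply: (claim hvd hI hnz hfg (n:=n)) => q w hq hw.
have [c ->] := proj1 (hfg x') hxI.
rewrite !mulr_suml; apply: Rsum => k.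
have -> : emb (c k) * (s0`_k) * y * q * w = emb (c k) * ((q * s0`_k) * (y * w)) by ring.
apply: RM; first exact: Remb.
have hg : q * s0`_k \in prods s0 n.+1 by apply: allpairs_f => //; exact: mem_nth.
have [sg [hel hvg]] := hSG _ hg.
apply: hvg => b [c' ->]; rewrite mulr_sumr; apply: Rsum => l.
have [m [j [p [hjp ->]]]] := hel _ (mem_nth 0 (ltn_ord l)).
rewrite mulr_sumr mulr_sumr; apply: Rsum => i.
have [hj hp] := hjp i (ltn_ord i).
have -> : y * w * (emb (c' l) * (j i * p i)) = emb (c' l) * ((y * j i) * (w * p i)) by ring.
apply: RM; first exact: Remb.
apply: RM; last exact: Sn_pow hw hp.
by apply: hy; apply: mem_span.
Qed.
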